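(* Let $\mathcal X\subseteq\Delta_d$ be convex, let $\ell_1,\dots,\ell_T\in[0,1]^d$, and let $R:\mathcal X\to\mathbb R$ be a regularizer that is $1$-strongly convex with respect to a norm $\|\cdot\|$, with dual norm $\|\cdot\|_*$. Run optimistic online mirror descent (OOMD) with learning rate $\eta>0$ on the losses $\ell_t$. Then for any $x^\star\in\mathcal X$ and any nonnegative weights $q_1,\dots,q_{T+1}$, $$\sum_{t=1}^Tq_t\langle x_t-x^\star,\ell_t\rangle\le\frac{q_1D_R(x^\star,\tilde x_0)}{\eta}+\frac1\eta\sum_{t=1}^T(q_{t+1}-q_t)D_R(x^\star,\tilde x_t)+\frac\eta2\sum_{t=1}^Tq_t\|\ell_t-\tilde\ell_t\|_*^2.$$
   Context: OOMD: $\tilde x_0=\arg\min_{x\in\mathcal X}R(x)$; for $t=1,\dots,T$: $x_t=\arg\min_{x\in\mathcal X}\{\langle\tilde\ell_t,x\rangle+\frac1\eta D_R(x,\tilde x_{t-1})\}$ and $\tilde x_t=\arg\min_{x\in\mathcal X}\{\langle\ell_t,x\rangle+\frac1\eta D_R(x,\tilde x_{t-1})\}$, where $\tilde\ell_1=0$ and $\tilde\ell_t=\ell_{t-1}$ for $t\ge2$. $D_R(x,y)=R(x)-R(y)-\langle\nabla R(y),x-y\rangle$ is the Bregman divergence. *)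

(* Defs.v *)
From HB Require Import structures.
From mathcomp Require Import all_boot all_order all_algebra.
From mathcomp Require Import all_classical all_reals all_analysis.
Set Implicit Arguments. Unset Strict Implicit. Unset Printing Implicit Defensive.
Import Order.TTheory GRing.Theory Num.Theory.
Import numFieldNormedType.Exports.
Local Open Scope classical_set_scope.
Local Open Scope ring_scope.

Section Defs.
Variables (R : realType) (d : nat).
Notation vec := 'rV[R]_d.

Definition ip (a b : vec) : R := \sum_(i < d) a 0 i * b 0 i.

Definition simplex : set vec :=
  [set x | (forall i, 0 <= x 0 i) /\ \sum_(i < d) x 0 i = 1].

Definition is_norm (N : vec -> R) : Prop :=
  (forall x, 0 <= N x) /\ (forall x, N x = 0 -> x = 0) /\
  (forall (a : R) x, N (a *: x) = `|a| * N x) /\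
  (forall x y, N (x + y) <= N x + N y).

Definition dual_norm (N : vec -> R) (z : vec) : R :=
  sup [set ip z x | x in [set x | N x <= 1]].

Definition strongly_convex1 (N : vec -> R) (X : set vec) (Rg : vec -> R) : Prop :=
  forall x y (lam : R), X x -> X y -> 0 <= lam <= 1 ->
    Rg (lam *: x + (1 - lam) *: y) <=
      lam * Rg x + (1 - lam) * Rg y - lam * (1 - lam) / 2 * N (x - y) ^+ 2.

Definition grad (Rg : vec -> R) (y : vec) : vec :=
  \row_(i < d) ('D_(delta_mx 0 i) Rg y).

Definition bregman (Rg : vec -> R) (x y : vec) : R :=
  Rg x - Rg y - ip (grad Rg y) (x - y).

Definition ltilde (l : nat -> vec) (t : nat) : vec :=
  if (t <= 1)%N then 0 else l t.-1.

Definition omd_step (X : set vec) (Rg : vec -> R) (eta : R)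
  (g prev y : vec) : Prop :=
  X y /\ forall z, X z ->
    ip g y + bregman Rg y prev / eta <= ip g z + bregman Rg z prev / eta.

Definition is_OOMD (X : set vec) (Rg : vec -> R) (eta : R) (T : nat)
  (l : nat -> vec) (x xt : nat -> vec) : Prop :=
  (X (xt 0%N) /\ forall z, X z -> Rg (xt 0%N) <= Rg z) /\
  forall t, (1 <= t <= T)%N ->
    omd_step X Rg eta (ltilde l t) (xt t.-1) (x t) /\
    omd_step X Rg eta (l t) (xt t.-1) (xt t).

End Defs.

(* Main.v *)
Require Import Defs.
From HB Require Import structures.
From mathcomp Require Import all_boot all_order all_algebra.
From mathcomp Require Import all_classical all_reals all_analysis.
From mathcomp Require Import lra ring.
Import Order.TTheory GRing.Theory Num.Theory.
Import numFieldNormedType.Exports.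
Local Open Scope classical_set_scope.
Local Open Scope ring_scope.

Lemma conv_mem (R : realType) d (X : set 'rV[R]_d) (cX : convex_set X) y z (s : R) :
  X y -> X z -> 0 <= s -> s <= 1 -> X (s *: z + (1 - s) *: y).
Proof.
move=> Xy Xz s0 s1.
have := cX z y (Itv01 s0 s1) (mem_set Xz) (mem_set Xy).
by rewrite inE.
Qed.

Lemma D_le (R : realType) d (f : 'rV[R]_d -> R) y v (b e : R) : 0 < e ->
  derivable f y v -> (forall s, 0 < s < e -> f (s *: v + y) - f y <= s * b) ->
  'D_v f y <= b.
Proof.
move=> e0 df H.
have H2 := cvg_dnbhs_at_right df.
rewrite /derive -(cvg_lim _ H2) //.
apply: limr_le; first by apply/cvg_ex; eexists; exact: H2.
near=> h.
have h0 : 0 < h by near: h; exact: nbhs_right_gt.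
have he : h < e by near: h; exact: nbhs_right_lt.
rewrite /= [X in X <= _]mulrC ler_pdivrMr // mulrC.
by apply: H; rewrite h0 he.
Unshelve. all: by end_near.
Qed.

Lemma D_ge (R : realType) d (f : 'rV[R]_d -> R) y v (b e : R) : 0 < e ->
  derivable f y v -> (forall s, 0 < s < e -> s * b <= f (s *: v + y) - f y) ->
  b <= 'D_v f y.
Proof.
move=> e0 df H.
have H2 := cvg_dnbhs_at_right df.
rewrite /derive -(cvg_lim _ H2) //.
apply: limr_ge; first by apply/cvg_ex; eexists; exact: H2.
near=> h.
have h0 : 0 < h by near: h; exact: nbhs_right_gt.
have he : h < e by near: h; exact: nbhs_right_lt.
rewrite /= [X in _ <= X]mulrC ler_pdivlMr // mulrC.
by apply: H; rewrite h0 he.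
Unshelve. all: by end_near.
Qed.


Lemma mul_div_le {R : realType} {eta a b c e : R} : 0 < eta ->
  a + b / eta <= c + e / eta -> eta * a + b <= eta * c + e.
Proof.
move=> h H; have := ler_wpM2l (ltW h) H.
by rewrite !mulrDr !(mulrCA eta _ eta^-1) !mulfV ?gt_eqF // !mulr1.
Qed.

Section S.
Variables (R : realType) (d : nat).
Implicit Types (x y z : 'rV[R]_d).

Lemma coord_le x i : `|x 0 i| <= `|x|.
Proof.
have /mapP[j Hj ->] : `|x 0 i| \in [seq `|x k.1 k.2| | k : 'I_1 * 'I_d].
  by apply/mapP; exists (0, i) => //=; rewrite mem_enum.
by rewrite [leRHS]/Num.norm /= mx_normrE; apply/bigmax_geP; right => /=; exists j.
Qed.

Lemma ipC x y : ip x y = ip y x.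
Proof. by rewrite /ip; apply: eq_bigr => i _; rewrite mulrC. Qed.
Lemma ipDr x y z : ip x (y + z) = ip x y + ip x z.
Proof. by rewrite /ip -big_split; apply: eq_bigr => i _; rewrite mxE mulrDr. Qed.
Lemma ipZr x k y : ip x (k *: y) = k * ip x y.
Proof. by rewrite /ip mulr_sumr; apply: eq_bigr => i _; rewrite mxE mulrCA. Qed.
Lemma ipNr x y : ip x (- y) = - ip x y.
Proof. by rewrite -scaleN1r ipZr mulN1r. Qed.
Lemma ipBr x y z : ip x (y - z) = ip x y - ip x z.
Proof. by rewrite ipDr ipNr. Qed.
Lemma ipDl x y z : ip (y + z) x = ip y x + ip z x.
Proof. by rewrite ipC ipDr ipC (ipC x). Qed.
Lemma ipNl x y : ip (- y) x = - ip y x.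
Proof. by rewrite ipC ipNr ipC. Qed.
Lemma ipBl x y z : ip (y - z) x = ip y x - ip z x.
Proof. by rewrite ipDl ipNl. Qed.
Lemma ip0r x : ip x 0 = 0.
Proof. by rewrite -(scale0r 0) ipZr mul0r. Qed.

Variable N : 'rV[R]_d -> R.
Hypothesis hN : is_norm N.

Lemma N0 : N 0 = 0.
Proof. by case: hN => _ [_ [hZ _]]; rewrite -(scale0r 0) hZ normr0 mul0r. Qed.

Lemma NN x : N (- x) = N x.
Proof. by case: hN => _ [_ [hZ _]]; rewrite -scaleN1r hZ normrN normr1 mul1r. Qed.

Lemma Nge0 x : 0 <= N x. Proof. by case: hN. Qed.

Lemma N_sum (I : Type) (r : seq I) (F : I -> 'rV[R]_d) :
  N (\sum_(i <- r) F i) <= \sum_(i <- r) N (F i).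
Proof.
case: hN => _ [_ [_ hD]].
elim: r => [|a r IH]; first by rewrite !big_nil N0.
rewrite !big_cons; apply: le_trans (hD _ _) _; exact: lerD.
Qed.

Lemma N_lip x : N x <= (\sum_(i < d) N (delta_mx 0 i)) * `|x|.
Proof.
case: hN => _ [_ [hZ _]].
rewrite {1}(row_sum_delta x). apply: le_trans; first exact: N_sum.
rewrite mulr_suml; apply: ler_sum => i _; rewrite hZ mulrC.
by apply: ler_wpM2l; [exact: Nge0 | exact: coord_le].
Qed.

Lemma N_cont : continuous N.
Proof.
case: hN => _ [_ [_ hD]].
set C := \sum_(i < d) N (delta_mx 0 i).
have C0 : 0 <= C by apply: sumr_ge0 => i _; exact: Nge0.
move=> x; apply/(@cvgrPdist_lt _ _ _ _ (nbhs_filter x)) => e e0.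
apply/nbhs_ballP; exists (e / (C + 1)) => /=; first by rewrite divr_gt0 // ltr_wpDl.
move=> y /= hxy; rewrite -ball_normE /= in hxy.
have h1 : `|N x - N y| <= N (x - y).
  have t1 : N y <= N (y - x) + N x by have := hD (y - x) x; rewrite subrK.
  have t2 : N x <= N (x - y) + N y by have := hD (x - y) y; rewrite subrK.
  rewrite -opprB NN in t1.
  rewrite ler_norml; apply/andP; split; lra.
apply: le_lt_trans h1 _; apply: le_lt_trans (N_lip _) _.
have : C * `|x - y| <= (C + 1) * `|x - y|.
  by apply: ler_wpM2r => //; rewrite lerDl.
move=> /le_lt_trans; apply.
by rewrite mulrC -ltr_pdivlMr ?ltr_wpDl.
Qed.


Lemma N_equiv (x0 : 'rV[R]_d) : x0 != 0 ->
  exists2 M, 0 < M & forall x, `|x| <= M * N x.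
Proof.
move=> x00.
case: hN => _ [hE [hZ _]].
pose S := [set x : 'rV[R]_d | `|x| = 1].
have S0 : S !=set0.
  exists (`|x0|^-1 *: x0); rewrite /S /= normrZ normfV normr_id mulVf //.
  by rewrite normr_eq0.
have cS : compact S.
  apply: bounded_closed_compact.
    rewrite /bounded_near; exists 1; split; first by rewrite num_real.
    by move=> M M1 x /= ->; exact: ltW.
  have -> : S = Num.norm @^-1` [set 1] by [].
  apply: preimage_closed; last exact: closed_eq.
  by move=> x _; exact: norm_continuous.
have [c Sc cmin] := compact_EVT_min S0 cS (continuous_subspaceT (N_cont)).
rewrite inE /S /= in Sc.
have m0 : 0 < N c.
  rewrite lt_neqAle Nge0 andbT eq_sym; apply/eqP => /hE c0.
  by move: Sc; rewrite c0 normr0 => /eqP; rewrite eq_sym oner_eq0.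
exists (N c)^-1; first by rewrite invr_gt0.
move=> x; case: (eqVneq x 0) => [->|x0']; first by rewrite normr0 N0 mulr0.
have nx : 0 < `|x| by rewrite normr_gt0.
have := cmin (`|x|^-1 *: x).
rewrite !inE /S /= normrZ normfV normr_id mulVf ?normr_eq0 // hZ normfV normr_id.
move=> /(_ erefl) h.
rewrite mulrC ler_pdivlMr //.
by rewrite -ler_pdivlMl // mulrC.
Qed.


Lemma dual_bound (x0 : 'rV[R]_d) z v : x0 != 0 ->
  ip z v <= N v * dual_norm N z.
Proof.
move=> x00; have [M M0 HM] := N_equiv x0 x00.
case: hN => _ [hE [hZ _]].
pose E := [set ip z x | x in [set x | N x <= 1]].
have hs : has_sup E.
  split; first by exists 0, 0; rewrite /= ?N0 ?ip0r.
  exists ((\sum_(i < d) `|z 0 i|) * M) => _ [x /= Nx <-].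
  apply: le_trans (ler_norm _) _.
  rewrite /ip; apply: le_trans (ler_norm_sum _ _ _) _.
  rewrite mulr_suml; apply: ler_sum => i _.
  rewrite normrM; apply: ler_wpM2l => //.
  apply: le_trans (coord_le _ _) _; apply: le_trans (HM x) _.
  by rewrite ler_piMr // ltW.
case: (eqVneq v 0) => [->|v0]; first by rewrite ip0r N0 mul0r.
have Nv : 0 < N v by rewrite lt_neqAle Nge0 andbT eq_sym; apply/eqP => /hE; apply/eqP.
have -> : ip z v = N v * ip z ((N v)^-1 *: v).
  by rewrite ipZr mulrA mulfV ?gt_eqF // mul1r.
apply: ler_wpM2l; first exact: ltW.
apply: sup_upper_bound => //; exists ((N v)^-1 *: v) => //=.
by rewrite hZ normfV gtr0_norm // mulVf ?gt_eqF.
Qed.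


Lemma D_ip (f : 'rV[R]_d -> R) y v : differentiable f y ->
  'D_v f y = ip (grad f y) v.
Proof.
move=> df; rewrite deriveE // {1}(row_sum_delta v) linear_sum /ip.
apply: eq_bigr => i _; rewrite linearZ /= mxE deriveE // mulrC.
by [].
Qed.

Lemma lim_small (a b c : R) : 0 <= c ->
  (forall s, 0 < s < 1 -> a <= b + s * c) -> a <= b.
Proof.
move=> c0 H; apply/ler_addgt0Pr => e e0.
pose D := 2 * (e + c).
have D0 : 0 < D by rewrite /D; lra.
have s0 : 0 < e / D by rewrite divr_gt0.
have s1 : e / D < 1 by rewrite ltr_pdivrMr // mul1r /D; lra.
apply: le_trans (H (e / D) _) _; first by rewrite s0 s1.
rewrite lerD2l mulrAC ler_pdivrMr // /D; nra.
Qed.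

End S.

Section B.
Variables (R : realType) (d : nat) (X : set 'rV[R]_d) (N : 'rV[R]_d -> R)
  (Rg : 'rV[R]_d -> R).
Hypothesis cX : convex_set X.
Hypothesis dR : forall y, X y -> differentiable Rg y.
Hypothesis sc : strongly_convex1 N X Rg.

Lemma breg_ge a b : X a -> X b -> N (a - b) ^+ 2 / 2 <= bregman Rg a b.
Proof.
move=> Xa Xb.
set v := a - b; set c := N v ^+ 2 / 2.
have c0 : 0 <= c by rewrite /c divr_ge0 // sqr_ge0.
suff H : 'D_v Rg b <= Rg a - Rg b - c.
  by rewrite /bregman -(@D_ip _ _ Rg b v (dR b Xb)); lra.
apply: (@lim_small _ _ _ c c0) => s0 /andP[s00 s01].
apply: (@D_le _ _ Rg b v _ s0) => //; first exact: diff_derivable (dR b Xb).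
move=> s /andP[s_0 s_s0].
have -> : s *: v + b = s *: a + (1 - s) *: b.
  by rewrite /v scalerBr scalerBl scale1r addrA addrAC.
have s1 : s <= 1 by lra.
have := sc a b s Xa Xb; rewrite (ltW s_0) s1 -/v => /(_ isT) H.
have h : 0 <= s * (s0 - s) * c by rewrite mulr_ge0 // mulr_ge0 //; lra.
rewrite /c in h *; lra.
Qed.




Lemma step_ineq eta g p y z : 0 < eta -> omd_step X Rg eta g p y -> X z ->
  eta * ip g (y - z) <= bregman Rg z p - bregman Rg z y - bregman Rg y p.
Proof.
move=> e0 [Xy Hmin] Xz.
set v := z - y.
suff H : ip (grad Rg p) v - eta * ip g v <= 'D_v Rg y.
  rewrite (@D_ip _ _ Rg y v (dR y Xy)) in H.
  have e1 : ip (grad Rg p) (z - p) = ip (grad Rg p) v + ip (grad Rg p) (y - p).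
    by rewrite -ipDr /v addrA subrK.
  have e2 : ip g (y - z) = - ip g v by rewrite -ipNr /v opprB.
  rewrite /bregman e1 e2 -/v; lra.
apply: (@D_ge _ _ Rg y v _ 1) => //; first exact: diff_derivable (dR y Xy).
move=> s /andP[s0 s1].
have Xw : X (s *: v + y).
  have -> : s *: v + y = s *: z + (1 - s) *: y.
    by rewrite /v scalerBr scalerBl scale1r addrA addrAC.
  by apply: conv_mem => //; lra.
have H0 := Hmin _ Xw; rewrite /bregman in H0.
have e3 : s *: v + y - p = s *: v + (y - p) by rewrite addrA.
rewrite e3 !ipDr !ipZr in H0; have H := mul_div_le e0 H0.
nra.
Qed.


Hypothesis hN : is_norm N.

Lemma per_t (x0 : 'rV[R]_d) eta gl gt p xt_ x_ u : x0 != 0 -> 0 < eta -> X p ->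
  omd_step X Rg eta gt p x_ -> omd_step X Rg eta gl p xt_ -> X u ->
  ip (x_ - u) gl <=
    (bregman Rg u p - bregman Rg u xt_) / eta + eta / 2 * dual_norm N (gl - gt) ^+ 2.
Proof.
move=> x00 e0 Xp Sx Sxt Xu.
have Xx := Sx.1; have Xxt := Sxt.1.
have h1 := @step_ineq eta gl p xt_ u e0 Sxt Xu.
have h2 := @step_ineq eta gt p x_ xt_ e0 Sx Xxt.
have h3 := @breg_ge xt_ x_ Xxt Xx.
have h4 := @breg_ge x_ p Xx Xp.
have h5 : 0 <= N (x_ - p) ^+ 2 / 2 by rewrite divr_ge0 // sqr_ge0.
have h6 := @dual_bound R d N hN x0 (gl - gt) (x_ - xt_) x00.
set n := N (x_ - xt_) in h6.
have hn : N (xt_ - x_) = n by rewrite -opprB (@NN _ _ _ hN).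
rewrite hn in h3.
set sd := dual_norm N (gl - gt) in h6 *.
have h7 : eta * ip (gl - gt) (x_ - xt_) <= eta * (n * sd) by rewrite ler_wpM2l // ltW.
have h8 : 0 <= (n - eta * sd) ^+ 2 by rewrite sqr_ge0.
have e1 : ip (x_ - u) gl = ip gl (xt_ - u) + ip (gl - gt) (x_ - xt_) + ip gt (x_ - xt_).
  by rewrite ipC ipBl -addrA subrK -ipDr [xt_ - u + _]addrC addrA subrK.
rewrite e1 -(ler_pM2l e0) !mulrDr (mulrCA eta _ eta^-1) mulfV ?gt_eqF // mulr1.
nra.
Qed.

End B.

Lemma tele (R : realType) (q D : nat -> R) n :
  \sum_(1 <= t < n.+1) q t * (D t.-1 - D t) =
  q 1%N * D 0%N + \sum_(1 <= t < n.+1) (q t.+1 - q t) * D t - q n.+1 * D n.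
Proof.
elim: n => [|n IH]; first by rewrite !big_geq //; lra.
rewrite big_nat_recr // IH [in RHS]big_nat_recr //=; lra.
Qed.


Theorem lemma3 (R : realType) (d : nat) (X : set 'rV[R]_d)
  (N : 'rV[R]_d -> R) (Rg : 'rV[R]_d -> R) (eta : R) (T : nat)
  (l : nat -> 'rV[R]_d) (x xt : nat -> 'rV[R]_d) (xs : 'rV[R]_d) (q : nat -> R) :
  X `<=` @simplex R d ->
  convex_set X ->
  (forall t, (1 <= t <= T)%N -> forall i, 0 <= l t 0 i <= 1) ->
  is_norm N ->
  (forall y, X y -> differentiable Rg y) ->
  strongly_convex1 N X Rg ->
  0 < eta ->
  is_OOMD X Rg eta T l x xt ->
  X xs ->
  (forall t, (1 <= t <= T.+1)%N -> 0 <= q t) ->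
  \sum_(1 <= t < T.+1) q t * ip (x t - xs) (l t) <=
    q 1%N * bregman Rg xs (xt 0%N) / eta
    + 1 / eta * \sum_(1 <= t < T.+1) (q t.+1 - q t) * bregman Rg xs (xt t)
    + eta / 2 * \sum_(1 <= t < T.+1) q t * dual_norm N (l t - ltilde l t) ^+ 2.
Proof.
move=> hsub cX hl hN dR sc e0 [[X0 _] Hst] Xs hq.
have xs0 : xs != 0.
  apply/eqP => h; have [_ hs] := hsub _ Xs; move: hs; rewrite h.
  have -> : \sum_(i < d) (0 : 'rV[R]_d) 0 i = 0 by apply: big1 => i _; rewrite mxE.
  move=> h01; lra.
have XT : forall t, (t <= T)%N -> X (xt t).
  case=> [|t] ht; first exact: X0.
  by have [_ [? _]] := Hst t.+1 ht.
pose D t := bregman Rg xs (xt t).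
pose sd t := dual_norm N (l t - ltilde l t).
have S1 : \sum_(1 <= t < T.+1) q t * ip (x t - xs) (l t) <=
   \sum_(1 <= t < T.+1) (1 / eta * (q t * (D t.-1 - D t)) + eta / 2 * (q t * sd t ^+ 2)).
  apply: ler_sum_nat => t /andP[t1 tT].
  have [Sx Sxt] := Hst t (introT andP (conj t1 tT)).
  have Xp : X (xt t.-1) by apply: XT; rewrite (leq_trans (leq_pred t)).
  have H := @per_t _ _ _ _ _ cX dR sc hN xs eta (l t) (ltilde l t) (xt t.-1) (xt t) (x t) xs xs0 e0 Xp Sx Sxt Xs.
  have hqt : 0 <= q t by apply: hq; rewrite t1 (ltnW tT).
  apply: le_trans (ler_wpM2l hqt H) _.
  rewrite le_eqVlt; apply/orP; left; apply/eqP; rewrite /D /sd; ring.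
rewrite big_split /= -!mulr_sumr tele in S1.
apply: le_trans S1 _.
have hDT : 0 <= D T.
  apply: le_trans (@breg_ge _ _ _ _ _ dR sc xs (xt T) Xs (XT T (leqnn T))).
  by rewrite divr_ge0 // sqr_ge0.
have hqT : 0 <= q T.+1 by apply: hq; rewrite ltn0Sn leqnn.
have hp : 0 <= 1 / eta * (q T.+1 * D T).
  by apply: mulr_ge0; [rewrite divr_ge0 // ltW | exact: mulr_ge0].
rewrite /D /sd /= in hp *.
lra.
Qed.
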